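(* For all integers $t,r\ge 2$, $$F_v(T_{2tr,2r},T_{2tr,2r};2r+1)\le 5F_v(T_{tr,r},T_{tr,r};r+1).$$ In particular, $F_v(T_{4t,4},T_{4t,4};5)\le 50t-25$ for all $t\ge2$.
   Context: All graphs are finite and simple. $T_{n,s}$ is the Turán graph: the complete $s$-partite graph on $n$ vertices with parts as equal as possible (so $T_{st,s}$ is complete $s$-partite with all parts of size $t$; $T_{2t,2}=K_{t,t}$). ''A graph $F$ contains $H$'' means $F$ has a (not necessarily induced) subgraph isomorphic to $H$. $G\rightarrow(H_1,H_2)^v$ means: for every partition $V(G)=X_1\cup X_2$ there is $i$ such that the subgraph induced by $X_i$ contains $H_i$. $F_v(H_1,H_2;k)$ is the minimum number of vertices of a $K_k$-free graph $G$ with $G\rightarrow(H_1,H_2)^v$. *)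

(* Defs.v *)
From mathcomp Require Import all_boot.
Set Implicit Arguments. Unset Strict Implicit. Unset Printing Implicit Defensive.

(* A simple graph on vertex type T is a symmetric irreflexive e : rel T. *)

(* The subgraph of (T,e) induced by X contains (V,h) (not necessarily induced):
   there is an injective map V -> X preserving adjacency. *)
Definition contains_in (T : finType) (e : rel T) (X : {set T})
    (V : finType) (h : rel V) : Prop :=
  exists f : V -> T, [/\ injective f, (forall v, f v \in X) &
                         (forall u v, h u v -> e (f u) (f v))].

Definition complete_rel (k : nat) : rel 'I_k := fun i j => i != j.

(* Turan graph T_{n,s}: vertices 'I_n, parts = residue classes mod s
   (sizes differ by at most 1), edges between different parts. *)
Definition turan_rel (n s : nat) : rel 'I_n := fun i j => i %% s != j %% s.

Definition Kfree (T : finType) (e : rel T) (k : nat) : Prop :=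
  ~ @contains_in T e [set: T] _ (@complete_rel k).

Definition vertex_arrows (T : finType) (e : rel T)
    (V1 : finType) (h1 : rel V1) (V2 : finType) (h2 : rel V2) : Prop :=
  forall X1 : {set T}, contains_in e X1 h1 \/ contains_in e (~: X1) h2.

(* There is a K_k-free simple graph on n vertices with G -> (H1,H2)^v.
   F_v(H1,H2;k) is the least n with Fv_admissible k H1 H2 n. *)
Definition Fv_admissible (k : nat) (V1 : finType) (h1 : rel V1)
    (V2 : finType) (h2 : rel V2) (n : nat) : Prop :=
  exists e : rel 'I_n, [/\ symmetric e, irreflexive e, Kfree e k &
                          vertex_arrows e h1 h2].

(* Main.v *)
Require Import Defs.
From mathcomp Require Import all_boot zify.
Set Implicit Arguments. Unset Strict Implicit. Unset Printing Implicit Defensive.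

Definition adj5 (a b : 'I_5) : bool := (a.+1 %% 5 == b) || (b.+1 %% 5 == a).
Definition compat (a b : 'I_5) : bool := (a == b) || adj5 a b.
Lemma L5 : forall a b y : 'I_5, compat a y -> compat a b -> compat b y -> a != b -> (y == a) || (y == b).
Proof.
by move=> [[|[|[|[|[|a]]]]] ?] [[|[|[|[|[|b]]]]] ?] [[|[|[|[|[|y]]]]] ?].
Qed.

Definition blow (n : nat) (e : rel 'I_n) : rel ('I_5 * 'I_n) :=
  fun u v => if u.1 == v.1 then e u.2 v.2 else adj5 u.1 v.1.

Lemma transport (T : finType) (E : rel T) k (V1 : finType) (h1 : rel V1)
  (V2 : finType) (h2 : rel V2) :
  symmetric E -> irreflexive E -> Kfree E k -> vertex_arrows E h1 h2 ->
  Fv_admissible k h1 h2 #|T|.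
Proof.
move=> sE iE kE aE.
exists (fun i j => E (enum_val i) (enum_val j)); split.
- by move=> i j; apply: sE.
- by move=> i; apply: iE.
- move=> [f [finj _ fE]]; apply: kE.
  exists (fun v => enum_val (f v)); split => //.
  by move=> u v /enum_val_inj /finj.
- move=> X1.
  case: (aE [set x | enum_rank x \in X1]) => [[f [finj fin fE]]|[f [finj fin fE]]].
  + left; exists (fun v => enum_rank (f v)); split.
    * by move=> u v /enum_rank_inj /finj.
    * by move=> v; move: (fin v); rewrite inE.
    * by move=> u v /fE; rewrite !enum_rankK.
  + right; exists (fun v => enum_rank (f v)); split.
    * by move=> u v /enum_rank_inj /finj.
    * by move=> v; move: (fin v); rewrite !inE.
    * by move=> u v /fE; rewrite !enum_rankK.
Qed.

Lemma widen_inj n m (h : n <= m) : injective (widen_ord h).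
Proof. by move=> i j /(congr1 val) /= /val_inj. Qed.

Lemma fiber n (e : rel 'I_n) k p (f : 'I_k -> 'I_5 * 'I_n) (S : {set 'I_k}) c :
  injective f -> (forall i j, complete_rel i j -> blow e (f i) (f j)) ->
  (forall i, i \in S -> (f i).1 = c) -> p <= #|S| ->
  contains_in e setT (@complete_rel p).
Proof.
move=> finj fE fS hp.
exists (fun j => (f (enum_val (widen_ord hp j))).2); split.
- move=> j l /= h.
  have H : enum_val (widen_ord hp j) = enum_val (widen_ord hp l); last first.
    move/enum_val_inj: H => /(congr1 val) /= H; exact: val_inj.
  apply: finj.
  rewrite [f (enum_val _)]surjective_pairing [f (enum_val (widen_ord hp l))]surjective_pairing.
  by rewrite h !fS ?enum_valP.
- by move=> v; rewrite inE.
- move=> u v uv.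
  have ne : enum_val (widen_ord hp u) != enum_val (widen_ord hp v).
    by rewrite (inj_eq enum_val_inj) (inj_eq (@widen_inj _ _ hp)).
  by have := fE _ _ ne; rewrite /blow !fS ?enum_valP // eqxx.
Qed.

Lemma blow_Kfree n (e : rel 'I_n) s : Kfree e s.+1 -> Kfree (blow e) (2 * s).+1.
Proof.
move=> kE [f [finj _ fE]]; apply: kE.
set a := (f ord0).1.
have comp : forall i j, compat (f i).1 (f j).1.
  move=> i j; case: (eqVneq i j) => [->|ij]; first by rewrite /compat eqxx.
  by have := fE i j ij; rewrite /blow /compat; case: (_ == _).
case: (pickP (fun i => (f i).1 != a)) => [j0 hj0 | none].
- set b := (f j0).1.
  have ab : a != b by rewrite eq_sym.
  have hab : forall i, ((f i).1 == a) || ((f i).1 == b).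
    move=> i; apply: L5 ab; [exact: comp | exact: comp | exact: comp].
  have := cardsC [set i | (f i).1 == a]; rewrite card_ord => hc.
  have [h1|h2] : (s.+1 <= #|[set i | (f i).1 == a]|) \/ (s.+1 <= #|~: [set i | (f i).1 == a]|) by lia.
  + apply: (fiber (S := [set i | (f i).1 == a]) (c := a) finj fE) => // i; rewrite inE; exact/eqP.
  + apply: (fiber (S := ~: [set i | (f i).1 == a]) (c := b) finj fE) => // i; rewrite !inE => /negbTE hi.
    by have := hab i; rewrite hi => /eqP.
- apply: (fiber (S := setT) (c := a) finj fE).
    by move=> i _; have := none i => /negbFE/eqP.
  by rewrite cardsT card_ord; lia.
Qed.

Definition qq s (i : nat) := i %/ (2 * s).
Definition mm s (i : nat) := i %% (2 * s).
Definition rr s (i : nat) := if mm s i < s then mm s i else mm s i - s.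
Definition kk s (i : nat) := qq s i * s + rr s i.

Lemma rr_lt s i : 0 < s -> rr s i < s.
Proof.
move=> s0; rewrite /rr; case: ifP => // /negbT; rewrite -leqNgt => h.
have : mm s i < 2 * s by rewrite /mm ltn_pmod // muln_gt0.
lia.
Qed.

Lemma kk_lt t s i : 0 < s -> i < 2 * t * s -> kk s i < t * s.
Proof.
move=> s0 hi.
have hq : qq s i < t by rewrite /qq ltn_divLR ?muln_gt0 //; lia.
have := rr_lt i s0; rewrite /kk.
have : (qq s i).+1 * s <= t * s by rewrite leq_mul2r hq orbT.
lia.
Qed.

Lemma kk_mod s i : 0 < s -> kk s i %% s = rr s i.
Proof. by move=> s0; rewrite /kk modnMDl modn_small // rr_lt. Qed.

Lemma kk_div s i : 0 < s -> kk s i %/ s = qq s i.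
Proof. by move=> s0; rewrite /kk divnMDl // divn_small ?addn0 // rr_lt. Qed.

Lemma i_dec s i : i = qq s i * (2 * s) + mm s i.
Proof. exact: divn_eq. Qed.

Lemma rr_eq s u v : (mm s u < s) = (mm s v < s) -> (rr s u == rr s v) = (mm s u == mm s v).
Proof.
rewrite /rr => h; rewrite h; case: ifP => hv; first by [].
move: h; rewrite hv => hu.
apply/eqP/eqP; lia.
Qed.

Lemma kk_inj s u v : 0 < s -> (mm s u < s) = (mm s v < s) -> kk s u = kk s v -> u = v.
Proof.
move=> s0 hb h.
have hq : qq s u = qq s v by rewrite -!kk_div // h.
have : rr s u = rr s v by rewrite -!kk_mod // h.
move/eqP; rewrite rr_eq // => /eqP hm.
by rewrite (i_dec s u) (i_dec s v) hq hm.
Qed.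

Lemma join_emb t s n (e : rel 'I_n) (Y : {set 'I_5 * 'I_n}) (a b : 'I_5) :
  0 < t -> 0 < s -> a != b -> adj5 a b ->
  contains_in e [set x | (a, x) \in Y] (@turan_rel (t * s) s) ->
  contains_in e [set x | (b, x) \in Y] (@turan_rel (t * s) s) ->
  contains_in (blow e) Y (@turan_rel (2 * t * s) (2 * s)).
Proof.
move=> t0 s0 ab adj [fA [iA inA hA]] [fB [iB inB hB]].
have ts0 : 0 < t * s by rewrite muln_gt0 t0.
pose x0 : 'I_(t * s) := Ordinal ts0.
pose g (i : 'I_(2 * t * s)) : 'I_5 * 'I_n :=
  if mm s i < s then (a, fA (insubd x0 (kk s i))) else (b, fB (insubd x0 (kk s i))).
have kl : forall i : 'I_(2 * t * s), kk s i < t * s by move=> i; apply: kk_lt.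
have vk : forall i : 'I_(2 * t * s), val (insubd x0 (kk s i)) = kk s i.
  by move=> i; apply: insubdK; exact: kl.
have tr : forall u v : 'I_(2 * t * s), (mm s u < s) = (mm s v < s) ->
    @turan_rel (2 * t * s) (2 * s) u v -> @turan_rel (t * s) s (insubd x0 (kk s u)) (insubd x0 (kk s v)).
  move=> u v huv; rewrite /turan_rel !vk !kk_mod // rr_eq //.
have ba : b != a by rewrite eq_sym.
have adj' : adj5 b a by rewrite /adj5 orbC.
exists g; split.
- move=> u v; rewrite /g.
  case: ifP => hu; case: ifP => hv.
  + case=> /iA /(congr1 val); rewrite !vk => /kk_inj; rewrite hu hv => /(_ s0 erefl) h; exact: val_inj.
  + by case=> /eqP; rewrite (negbTE ab).
  + by case=> /eqP; rewrite (negbTE ba).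
  + case=> /iB /(congr1 val); rewrite !vk => /kk_inj; rewrite hu hv => /(_ s0 erefl) h; exact: val_inj.
- move=> v; rewrite /g; case: ifP => _.
  + by have := inA (insubd x0 (kk s v)); rewrite inE.
  + by have := inB (insubd x0 (kk s v)); rewrite inE.
- move=> u v huv; rewrite /g /blow.
  case hu: (mm s u < s); case hv: (mm s v < s) => /=.
  + by rewrite ?eqxx; apply: hA; apply: tr => //; rewrite hu hv.
  + by rewrite (negbTE ab).
  + by rewrite (negbTE ba).
  + by rewrite ?eqxx; apply: hB; apply: tr => //; rewrite hu hv.
Qed.

Lemma blow_arrows t s n (e : rel 'I_n) : 0 < t -> 0 < s ->
  vertex_arrows e (@turan_rel (t * s) s) (@turan_rel (t * s) s) ->
  vertex_arrows (blow e) (@turan_rel (2 * t * s) (2 * s)) (@turan_rel (2 * t * s) (2 * s)).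
Proof.
move=> t0 s0 aE X.
pose P a := contains_in e [set x | (a, x) \in X] (@turan_rel (t * s) s).
pose Q a := contains_in e [set x | (a, x) \in ~: X] (@turan_rel (t * s) s).
have Hpq : forall a, P a \/ Q a.
  move=> a; case: (aE [set x | (a, x) \in X]) => h; [by left|right; rewrite /Q].
  suff -> : [set x | (a, x) \in ~: X] = ~: [set x | (a, x) \in X] by [].
  by apply/setP => x; rewrite !inE.
have JP : forall a b, a != b -> adj5 a b -> P a -> P b ->
    contains_in (blow e) X (@turan_rel (2 * t * s) (2 * s)) \/
    contains_in (blow e) (~: X) (@turan_rel (2 * t * s) (2 * s)).
  by move=> a b ab adj ha hb; left; apply: join_emb ha hb.
have JQ : forall a b, a != b -> adj5 a b -> Q a -> Q b ->
    contains_in (blow e) X (@turan_rel (2 * t * s) (2 * s)) \/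
    contains_in (blow e) (~: X) (@turan_rel (2 * t * s) (2 * s)).
  by move=> a b ab adj ha hb; right; apply: join_emb ha hb.
pose p0 := @Ordinal 5 0 isT. pose p1 := @Ordinal 5 1 isT.
pose p2 := @Ordinal 5 2 isT. pose p3 := @Ordinal 5 3 isT.
pose p4 := @Ordinal 5 4 isT.
have [h0|h0] := Hpq p0; have [h1|h1] := Hpq p1; have [h2|h2] := Hpq p2;
  have [h3|h3] := Hpq p3; have [h4|h4] := Hpq p4;
  first [ exact: (JP p0 p1 isT isT h0 h1) | exact: (JP p1 p2 isT isT h1 h2)
        | exact: (JP p2 p3 isT isT h2 h3) | exact: (JP p3 p4 isT isT h3 h4)
        | exact: (JP p4 p0 isT isT h4 h0)
        | exact: (JQ p0 p1 isT isT h0 h1) | exact: (JQ p1 p2 isT isT h1 h2)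
        | exact: (JQ p2 p3 isT isT h2 h3) | exact: (JQ p3 p4 isT isT h3 h4)
        | exact: (JQ p4 p0 isT isT h4 h0) ].
Qed.

Lemma step t s n : 0 < t -> 0 < s ->
  Fv_admissible s.+1 (@turan_rel (t * s) s) (@turan_rel (t * s) s) n ->
  Fv_admissible (2 * s).+1 (@turan_rel (2 * t * s) (2 * s)) (@turan_rel (2 * t * s) (2 * s)) (5 * n).
Proof.
move=> t0 s0 [e [sE iE kE aE]].
have := @transport _ (blow e) (2 * s).+1 _ (@turan_rel (2 * t * s) (2 * s)) _ (@turan_rel (2 * t * s) (2 * s)).
rewrite card_prod !card_ord; apply.
- move=> u v; rewrite /blow eq_sym; case: (_ == _); first exact: sE.
  by rewrite /adj5 orbC.
- by move=> u; rewrite /blow eqxx iE.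
- exact: blow_Kfree.
- exact: blow_arrows.
Qed.

Lemma base p : 0 < p -> Fv_admissible 2 (@turan_rel p 1) (@turan_rel p 1) (p + p).-1.
Proof.
move=> p0.
have emb : forall (X : {set 'I_(p + p).-1}), p <= #|X| ->
    contains_in (fun _ _ => false) X (@turan_rel p 1).
  move=> X hX; exists (fun j => enum_val (widen_ord hX j)); split.
  - move=> j l /enum_val_inj /(congr1 val) /= h; exact: val_inj.
  - by move=> v; apply: enum_valP.
  - by move=> u v; rewrite /turan_rel !modn1.
exists (fun _ _ => false); split => //.
- move=> [f [_ _ fE]].
  by have := fE (@Ordinal 2 0 isT) (@Ordinal 2 1 isT) isT.
- move=> X; have := cardsC X; rewrite card_ord => hc.
  have [h|h] : p <= #|X| \/ p <= #|~: X| by lia.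
  + by left; apply: emb.
  + by right; apply: emb.
Qed.

Theorem mainTheorem9 :
  (forall t r : nat, 2 <= t -> 2 <= r ->
     forall n : nat,
       Fv_admissible r.+1 (@turan_rel (t * r) r) (@turan_rel (t * r) r) n ->
       exists m : nat, m <= 5 * n /\
         Fv_admissible (2 * r).+1 (@turan_rel (2 * t * r) (2 * r))
                                  (@turan_rel (2 * t * r) (2 * r)) m)
  /\
  (forall t : nat, 2 <= t ->
     exists m : nat, m <= 50 * t - 25 /\
       Fv_admissible 5 (@turan_rel (4 * t) 4) (@turan_rel (4 * t) 4) m).
Proof.
split.
- move=> t r ht hr n H; exists (5 * n); split => //.
  by apply: step => //; lia.
- move=> t ht.
  have t0 : 0 < t by lia.
  have H1 := @step t 1 _ t0 isT (base (p := t * 1) ltac:(lia)).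
  have E1 : 2 * t * 1 = t * 2 by lia.
  rewrite E1 in H1.
  have H2 := @step t 2 _ t0 isT H1.
  exists (5 * (5 * (t * 1 + t * 1).-1)); split; first by lia.
  have E2 : 4 * t = 2 * t * 2 by lia.
  rewrite E2; exact: H2.
Qed.
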